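(* For $x,y\in\mathrm{dS}^d$ the following are equivalent: (i) $(x,y)\in G_{\mathbb C}.(\Xi_+\times\Xi_+)$; (ii) $\beta(x,y)>-1$; (iii) $\beta(x-y,x-y)<0$. In particular $\{x\in\mathrm{dS}^d:(x,e_1)\in G_{\mathbb C}.(\Xi_+\times\Xi_+)\}=\{x\in\mathrm{dS}^d: x_1<1\}$.
   Context: Let $d\ge1$. On $\mathbb C^{1+d}$ (standard basis $e_0,\dots,e_d$) let $\beta(z,w)=z_0w_0-z_1w_1-\dots-z_dw_d$, $V=\mathbb R^{1+d}$, $V_+=\{x\in V:x_0>0,\beta(x,x)>0\}$, $\mathrm{dS}^d_{\mathbb C}=\{z:\beta(z,z)=-1\}$, $\mathrm{dS}^d=\mathrm{dS}^d_{\mathbb C}\cap V$ (de Sitter space), $\Xi_+=\mathrm{dS}^d_{\mathbb C}\cap(V+iV_+)$. $G_{\mathbb C}=\mathrm{SO}_{1+d}(\mathbb C)$ (determinant-one complex linear maps preserving $\beta$) acts on pairs by $g.(z,w)=(gz,\overline g w)$, where $\overline g$ is the entrywise complex conjugate. *)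

(* Defs.v *)
From HB Require Import structures.
From mathcomp Require Import all_boot all_order all_algebra.
From mathcomp Require Import complex.
From mathcomp Require Import reals.
Set Implicit Arguments. Unset Strict Implicit. Unset Printing Implicit Defensive.
Import Order.TTheory GRing.Theory Num.Theory.
Local Open Scope ring_scope.

(* Ambient space K^{1+d} is modelled as column vectors 'cV[K]_(d.+1),
   with standard basis e_0, ..., e_d (e_i = delta_mx i 0). *)

Definition lsign {K : pzRingType} {n : nat} (i : 'I_n) : K :=
  if (i == 0 :> nat) then 1 else -1.

Definition beta {K : comPzRingType} {n : nat} (z w : 'cV[K]_n) : K :=
  \sum_(i < n) lsign i * z i 0 * w i 0.

Definition dS {R : realType} {d : nat} (x : 'cV[R]_(d.+1)) : Prop :=
  beta x x = -1.

Definition dSC {R : realType} {d : nat} (z : 'cV[R[i]]_(d.+1)) : Prop :=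
  beta z z = -1.

Definition Vplus {R : realType} {d : nat} (x : 'cV[R]_(d.+1)) : Prop :=
  0 < x 0 0 /\ 0 < beta x x.

Definition cplx {R : realType} {d : nat} (x : 'cV[R]_(d.+1)) : 'cV[R[i]]_(d.+1) :=
  map_mx (real_complex R) x.

Definition Xiplus {R : realType} {d : nat} (z : 'cV[R[i]]_(d.+1)) : Prop :=
  dSC z /\ Vplus (map_mx (@complex.Im R) z).

Definition SOC {R : realType} {d : nat} (g : 'M[R[i]]_(d.+1)) : Prop :=
  \det g = 1 /\ forall z w : 'cV[R[i]]_(d.+1), beta (g *m z) (g *m w) = beta z w.

Definition actC {R : realType} {d : nat} (g : 'M[R[i]]_(d.+1))
  (p : 'cV[R[i]]_(d.+1) * 'cV[R[i]]_(d.+1)) :=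
  (g *m p.1, map_mx (@conjc R) g *m p.2).

Definition in_GXi {R : realType} {d : nat}
  (p : 'cV[R[i]]_(d.+1) * 'cV[R[i]]_(d.+1)) : Prop :=
  exists g z w, [/\ SOC g, Xiplus z, Xiplus w & p = actC g (z, w)].

Definition evec {R : realType} {d : nat} (i : 'I_d.+1) : 'cV[R]_(d.+1) :=
  delta_mx i 0.

(* Main.v *)
Require Import Defs.
From HB Require Import structures.
From mathcomp Require Import all_boot all_order all_algebra.
From mathcomp Require Import complex.
From mathcomp Require Import reals.
From mathcomp Require Import ring lra.
Import Order.TTheory GRing.Theory Num.Theory.
Set Implicit Arguments. Unset Strict Implicit. Unset Printing Implicit Defensive.
Local Open Scope complex_scope.
Local Open Scope ring_scope.


Section Gen.
Variable K : comPzRingType.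
Variable n : nat.
Implicit Types x y z : 'cV[K]_n.

Lemma betaC x y : beta x y = beta y x.
Proof. by rewrite /beta; apply: eq_bigr => i _; ring. Qed.
Lemma beta_addl x y z : beta (x + y) z = beta x z + beta y z.
Proof. by rewrite /beta -big_split /=; apply: eq_bigr => i _; rewrite !mxE; ring. Qed.
Lemma beta_addr x y z : beta z (x + y) = beta z x + beta z y.
Proof. by rewrite /beta -big_split /=; apply: eq_bigr => i _; rewrite !mxE; ring. Qed.
Lemma beta_scalel a x y : beta (a *: x) y = a * beta x y.
Proof. by rewrite /beta mulr_sumr; apply: eq_bigr => i _; rewrite !mxE; ring. Qed.
Lemma beta_scaler a x y : beta y (a *: x) = a * beta y x.
Proof. by rewrite /beta mulr_sumr; apply: eq_bigr => i _; rewrite !mxE; ring. Qed.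
Lemma beta_oppl x y : beta (- x) y = - beta x y.
Proof. by rewrite -scaleN1r beta_scalel mulN1r. Qed.
Lemma beta_oppr x y : beta y (- x) = - beta y x.
Proof. by rewrite -scaleN1r beta_scaler mulN1r. Qed.
Lemma beta_subl x y z : beta (x - y) z = beta x z - beta y z.
Proof. by rewrite beta_addl beta_oppl. Qed.
Lemma beta_subr x y z : beta z (x - y) = beta z x - beta z y.
Proof. by rewrite beta_addr beta_oppr. Qed.

Lemma beta_deltar z (j : 'I_n) : beta z (delta_mx j 0) = lsign j * z j 0.
Proof.
rewrite /beta (bigD1 j) //= big1 ?addr0; first by rewrite !mxE !eqxx mulr1.
by move=> i /negbTE hij; rewrite !mxE hij mulr0.
Qed.
Lemma beta_deltal z (j : 'I_n) : beta (delta_mx j 0) z = lsign j * z j 0.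
Proof. by rewrite betaC beta_deltar. Qed.

Lemma mx_eq_vec (A B : 'M[K]_n) : (forall v : 'cV[K]_n, A *m v = B *m v) -> A = B.
Proof.
move=> H; apply/matrixP => i j.
have := congr1 (fun M : 'cV[K]_n => M i 0) (H (delta_mx j 0)).
by rewrite -!colE !mxE.
Qed.

Definition Em (c b : K) (t s : 'cV[K]_n) : 'M[K]_n :=
  1%:M + \matrix_(i, j) (t i 0 * (lsign j * ((c - 1) * t j 0 - b * s j 0))
                       + s i 0 * (lsign j * (b * t j 0 - (c - 1) * s j 0))).

Lemma Em_mul c b t s v : Em c b t s *m v =
  v + ((c - 1) * beta t v - b * beta s v) *: t
    + (b * beta t v - (c - 1) * beta s v) *: s.
Proof.
rewrite /Em mulmxDl mul1mx -addrA; congr (_ + _).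
apply/matrixP => i k; rewrite (ord1 k) !mxE.
under eq_bigr do rewrite !mxE mulrDl.
rewrite big_split /=.
have -> : \sum_(j < n) t i 0 * (lsign j * ((c - 1) * t j 0 - b * s j 0)) * v j 0
   = t i 0 * ((c - 1) * beta t v - b * beta s v).
  rewrite /beta !mulr_sumr -sumrB mulr_sumr; apply: eq_bigr => j _; ring.
have -> : \sum_(j < n) s i 0 * (lsign j * (b * t j 0 - (c - 1) * s j 0)) * v j 0
   = s i 0 * (b * beta t v - (c - 1) * beta s v).
  rewrite /beta !mulr_sumr -sumrB mulr_sumr; apply: eq_bigr => j _; ring.
ring.
Qed.

Section Frame.
Variables t s : 'cV[K]_n.
Hypotheses (Htt : beta t t = 1) (Hss : beta s s = -1) (Hts : beta t s = 0).

Lemma Em_beta c b z w : c * c = 1 + b * b ->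
  beta (Em c b t s *m z) (Em c b t s *m w) = beta z w.
Proof.
move=> hcb; rewrite !Em_mul.
rewrite !(beta_addl, beta_addr, beta_scalel, beta_scaler).
rewrite (betaC z t) (betaC z s) (betaC s t) Htt Hss Hts.
ring: hcb.
Qed.

Lemma Em_comp c1 b1 c2 b2 :
  Em c1 b1 t s *m Em c2 b2 t s = Em (c1 * c2 + b1 * b2) (c1 * b2 + b1 * c2) t s.
Proof.
apply: mx_eq_vec => v; rewrite -mulmxA !Em_mul.
rewrite !(beta_addl, beta_addr, beta_scalel, beta_scaler).
rewrite (betaC s t) Htt Hss Hts.
apply/matrixP => i k; rewrite !mxE; ring.
Qed.
End Frame.

Lemma Em10 t s : Em 1 0 t s = 1%:M.
Proof.
apply/matrixP => i j; rewrite /Em !mxE.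
by rewrite subrr !mul0r subrr !mulr0 !addr0.
Qed.

Definition Jm : 'M[K]_n := diag_mx (\row_i lsign i).

Lemma lsign2 (i : 'I_n) : lsign i * lsign i = 1 :> K.
Proof. by rewrite /lsign; case: ifP => _; rewrite ?mulr1 ?mulrNN ?mulr1. Qed.

Lemma det_preserve (A : 'M[K]_n) :
  (forall z w, beta (A *m z) (A *m w) = beta z w) -> \det A * \det A = 1.
Proof.
move=> H.
have HJ : A^T *m Jm *m A = Jm.
  apply/matrixP => i j.
  have := H (delta_mx i 0) (delta_mx j 0).
  rewrite beta_deltar !mxE -!colE /beta.
  rewrite /Jm => h; rewrite mul_mx_diag.
  transitivity (lsign j * ((j == i) && (0 == 0 :> 'I_1))%:R : K); last first.
    by rewrite eqxx andbT; case: (eqVneq i j) => [->|hij]; rewrite ?eqxx ?mulr1 ?mulr0 ?mulr0n // eq_sym (negbTE hij) mulr0 mulr0n.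
  rewrite -h; apply: eq_bigr => k _; rewrite !mxE; ring.
have dJ : \det Jm * \det Jm = 1.
  rewrite /Jm det_diag -big_split /=; apply: big1 => i _; rewrite mxE; exact: lsign2.
have := congr1 determinant HJ; rewrite !det_mulmx det_tr => h.
rewrite -[LHS]mulr1 -dJ.
transitivity ((\det A * \det Jm * \det A) * \det Jm); first ring.
by rewrite h.
Qed.

End Gen.



Section Real.
Variable R : realType.
Variable d : nat.
Local Notation n := d.+1.
Implicit Types a b p q u v x y : 'cV[R]_n.

Definition sp p q := \sum_(i < d) p (lift ord0 i) 0 * q (lift ord0 i) 0.

Lemma betaE p q : beta p q = p 0 0 * q 0 0 - sp p q.
Proof.
rewrite /beta big_ord_recl /lsign /= mul1r; congr (_ + _).
rewrite /sp -sumrN; apply: eq_bigr => i _; ring.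
Qed.

Lemma sp_ge0 p : 0 <= sp p p.
Proof. by apply: sumr_ge0 => i _; rewrite -expr2 sqr_ge0. Qed.

Lemma keyI p q : 0 <= (q 0 0) ^+ 2 * sp p p - 2%:R * (p 0 0 * q 0 0) * sp p q
                     + (p 0 0) ^+ 2 * sp q q.
Proof.
have <- : \sum_(i < d) (p (lift ord0 i) 0 * q 0 0 - p 0 0 * q (lift ord0 i) 0) ^+ 2
   = (q 0 0) ^+ 2 * sp p p - 2%:R * (p 0 0 * q 0 0) * sp p q + (p 0 0) ^+ 2 * sp q q.
  rewrite /sp !mulr_sumr -sumrB -big_split /=; apply: eq_bigr => i _; ring.
by apply: sumr_ge0 => i _; rewrite sqr_ge0.
Qed.

Lemma timelike0 q : 0 < beta q q -> 0 < q 0 0 * q 0 0.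
Proof. rewrite betaE => h; have := sp_ge0 q; lra. Qed.

Lemma lemC u t : 0 < beta t t -> 0 < t 0 0 -> 0 < beta u u -> 0 < beta u t ->
  0 < u 0 0.
Proof.
rewrite !betaE => htt ht0 huu hut.
have hI := keyI u t; have hu := sp_ge0 u; have ht := sp_ge0 t.
case: (ltrgtP (u 0 0) 0) => hu0 //; last first.
  by move: huu; rewrite hu0 mul0r; lra.
exfalso.
set u0 := u 0 0 in hu0 huu hut hI *; set t0 := t 0 0 in htt ht0 hut hI *.
set A := sp u u in huu hI hu *; set B := sp t t in htt hI ht *; set S := sp u t in hut hI *.
have h1 : u0 * t0 < 0 by nra.
have h2 : (u0 * t0) * S > (u0 * t0) * (u0 * t0) by nra.
have h3 : t0 ^+ 2 * A < t0 ^+ 2 * (u0 * u0) by nra.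
have h4 : u0 ^+ 2 * B < u0 ^+ 2 * (t0 * t0) by nra.
nra.
Qed.

Lemma lemB a b : Vplus a -> Vplus b -> 0 < beta a b.
Proof.
rewrite /Vplus !betaE => -[ha0 haa] [hb0 hbb].
have hI := keyI a b.
set a0 := a 0 0 in ha0 haa hI *; set b0 := b 0 0 in hb0 hbb hI *.
set A := sp a a in haa hI *; set B := sp b b in hbb hI *; set S := sp a b in hI *.
have h3 : b0 ^+ 2 * A < b0 ^+ 2 * (a0 * a0) by rewrite ltr_pM2l ?exprn_gt0 //; lra.
have h4 : a0 ^+ 2 * B < a0 ^+ 2 * (b0 * b0) by rewrite ltr_pM2l ?exprn_gt0 //; lra.
have h5 : 0 < a0 * b0 by nra.
have h6 : (a0 * b0) * S < (a0 * b0) * (a0 * b0).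
  rewrite !expr2 in hI h3 h4; nra.
rewrite ltr_pM2l // in h6; lra.
Qed.

Lemma Vplus_add a b : Vplus a -> Vplus b -> Vplus (a + b).
Proof.
move=> ha hb; have := lemB ha hb; move: ha hb; rewrite /Vplus => -[ha0 haa] [hb0 hbb] hab.
rewrite !mxE beta_addl !beta_addr (betaC b a); split; lra.
Qed.

Lemma lemA p q : 0 < beta q q -> beta p q = 0 -> beta p p <= 0.
Proof.
rewrite !betaE => hqq hpq.
have hI := keyI p q; have hq := sp_ge0 q; have hp := sp_ge0 p.
set p0 := p 0 0 in hpq hI *; set q0 := q 0 0 in hqq hpq hI *.
set A := sp p p in hI hp *; set B := sp q q in hqq hI hq *; set S := sp p q in hpq hI *.
have hS : S = p0 * q0 by lra.
rewrite hS in hI.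
have h1 : 0 <= p0 ^+ 2 * (q0 * q0 - B) by nra.
have h2 : q0 ^+ 2 * (A - p0 * p0) >= p0 ^+ 2 * (q0 * q0 - B) by nra.
have h3 : 0 < q0 ^+ 2 by nra.
nra.
Qed.

End Real.



Section CplxR.
Variable R : rcfType.
Implicit Types a b : R[i].

Lemma cReD a b : complex.Re (a + b) = complex.Re a + complex.Re b. Proof. by case: a; case: b. Qed.
Lemma cImD a b : complex.Im (a + b) = complex.Im a + complex.Im b. Proof. by case: a; case: b. Qed.
Lemma cReN a : complex.Re (- a) = - complex.Re a. Proof. by case: a. Qed.
Lemma cImN a : complex.Im (- a) = - complex.Im a. Proof. by case: a. Qed.
Lemma cReM a b : complex.Re (a * b) = complex.Re a * complex.Re b - complex.Im a * complex.Im b.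
Proof. by case: a; case: b. Qed.
Lemma cImM a b : complex.Im (a * b) = complex.Re a * complex.Im b + complex.Im a * complex.Re b.
Proof. by case: a; case: b. Qed.
Lemma cRer (r : R) : complex.Re (r%:C) = r. Proof. by []. Qed.
Lemma cImr (r : R) : complex.Im (r%:C) = 0. Proof. by []. Qed.
Lemma cRei : complex.Re ('i : R[i]) = 0. Proof. by []. Qed.
Lemma cImi : complex.Im ('i : R[i]) = 1. Proof. by []. Qed.
Lemma cRe0 : complex.Re (0 : R[i]) = 0. Proof. by []. Qed.
Lemma cIm0 : complex.Im (0 : R[i]) = 0. Proof. by []. Qed.
Lemma cRe1 : complex.Re (1 : R[i]) = 1. Proof. by []. Qed.
Lemma cIm1 : complex.Im (1 : R[i]) = 0. Proof. by []. Qed.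
Lemma cReJ a : complex.Re (a^*)%C = complex.Re a. Proof. by case: a. Qed.
Lemma cImJ a : complex.Im (a^*)%C = - complex.Im a. Proof. by case: a. Qed.

Lemma cReB a b : complex.Re (a - b) = complex.Re a - complex.Re b. Proof. by rewrite cReD cReN. Qed.
Lemma cImB a b : complex.Im (a - b) = complex.Im a - complex.Im b. Proof. by rewrite cImD cImN. Qed.

Lemma cRe_sum (I : Type) (r : seq I) (P : pred I) (F : I -> R[i]) :
  complex.Re (\sum_(i <- r | P i) F i) = \sum_(i <- r | P i) complex.Re (F i).
Proof. exact: (big_morph _ cReD cRe0). Qed.
Lemma cIm_sum (I : Type) (r : seq I) (P : pred I) (F : I -> R[i]) :
  complex.Im (\sum_(i <- r | P i) F i) = \sum_(i <- r | P i) complex.Im (F i).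
Proof. exact: (big_morph _ cImD cIm0). Qed.

End CplxR.

Section Cplx.
Variable R : realType.
Variable d : nat.
Local Notation n := d.+1.
Implicit Types z w : 'cV[R[i]]_n.
Implicit Types x y : 'cV[R]_n.

Definition revc z : 'cV[R]_n := map_mx (@complex.Re R) z.
Definition imv z : 'cV[R]_n := map_mx (@complex.Im R) z.

Lemma lsignC (i : 'I_n) : (lsign i : R[i]) = (lsign i : R)%:C.
Proof. by rewrite /lsign; case: ifP => _; rewrite ?rmorph1 ?rmorphN1. Qed.
Lemma Re_lsign (i : 'I_n) : complex.Re (lsign i : R[i]) = lsign i.
Proof. by rewrite lsignC. Qed.
Lemma Im_lsign (i : 'I_n) : complex.Im (lsign i : R[i]) = 0.
Proof. by rewrite lsignC. Qed.

Lemma Re_beta z w : complex.Re (beta z w) = beta (revc z) (revc w) - beta (imv z) (imv w).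
Proof.
rewrite /beta cRe_sum -sumrB; apply: eq_bigr => i _.
by rewrite !cReM !cImM Re_lsign Im_lsign !mxE; ring.
Qed.
Lemma Im_beta z w : complex.Im (beta z w) = beta (revc z) (imv w) + beta (imv z) (revc w).
Proof.
rewrite /beta cIm_sum -big_split /=; apply: eq_bigr => i _.
by rewrite !cImM !cReM Re_lsign Im_lsign !mxE; ring.
Qed.

Lemma beta_cplx x y : beta (cplx x) (cplx y) = (beta x y)%:C.
Proof.
rewrite /beta rmorph_sum; apply: eq_bigr => i _.
by rewrite !rmorphM lsignC !mxE.
Qed.

Lemma conj_cplx x : map_mx (@conjc R) (cplx x) = cplx x.
Proof. by apply/matrixP => i j; rewrite !mxE conjc_real. Qed.

Lemma revc_cplx x : revc (cplx x) = x.
Proof. by apply/matrixP => i j; rewrite !mxE. Qed.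
Lemma imv_cplx x : imv (cplx x) = 0.
Proof. by apply/matrixP => i j; rewrite !mxE. Qed.

Lemma revc_conj z : revc (map_mx (@conjc R) z) = revc z.
Proof. by apply/matrixP => i j; rewrite !mxE cReJ. Qed.
Lemma imv_conj z : imv (map_mx (@conjc R) z) = - imv z.
Proof. by apply/matrixP => i j; rewrite !mxE cImJ. Qed.

Lemma conj_mul (g : 'M[R[i]]_n) z :
  map_mx (@conjc R) (g *m z) = map_mx (@conjc R) g *m map_mx (@conjc R) z.
Proof. by rewrite map_mxM. Qed.

Lemma conjK_mx (g : 'M[R[i]]_n) : map_mx (@conjc R) (map_mx (@conjc R) g) = g.
Proof. by apply/matrixP => i j; rewrite !mxE conjcK. Qed.

Lemma rmorph_lsign (f : {rmorphism R[i] -> R[i]}) (i : 'I_n) : f (lsign i) = lsign i.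
Proof. by rewrite /lsign; case: ifP => _; rewrite ?rmorph1 ?rmorphN1. Qed.

Lemma beta_conj z w :
  beta (map_mx (@conjc R) z) (map_mx (@conjc R) w) = conjc (beta z w).
Proof.
rewrite /beta rmorph_sum; apply: eq_bigr => i _.
by rewrite !rmorphM !mxE rmorph_lsign. Qed.

End Cplx.



Section Dir.
Variable R : realType.
Variable d : nat.
Local Notation n := d.+1.
Implicit Types z w : 'cV[R[i]]_n.
Implicit Types x y : 'cV[R]_n.

Lemma dir12 x y : dS x -> dS y -> in_GXi (cplx x, cplx y) -> -1 < beta x y.
Proof.
move=> hx hy [g [z [w [[hdet hg] [hz hpz] [hw hpw] hp]]]].
rewrite /actC /= in hp; case: hp => ex ey.
have e1 : (beta x y)%:C = beta z (map_mx (@conjc R) w).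
  by rewrite -beta_cplx -(conj_cplx y) ey conj_mul conjK_mx ex hg.
have eRe := congr1 (@complex.Re R) e1; have eIm := congr1 (@complex.Im R) e1.
rewrite Re_beta revc_conj imv_conj /= in eRe.
rewrite Im_beta revc_conj imv_conj /= in eIm.
have zRe := congr1 (@complex.Re R) hz; have zIm := congr1 (@complex.Im R) hz.
have wRe := congr1 (@complex.Re R) hw; have wIm := congr1 (@complex.Im R) hw.
rewrite Re_beta /= in zRe; rewrite Im_beta /= in zIm.
rewrite Re_beta /= in wRe; rewrite Im_beta /= in wIm.
have hpz' : Vplus (imv z) by [].
have hpw' : Vplus (imv w) by [].
have hQ := Vplus_add hpz' hpw'.
have hPQ : beta (revc z - revc w) (imv z + imv w) = 0.
  rewrite beta_subl !beta_addr.
  rewrite !beta_oppr in eIm; rewrite (betaC (imv z) (revc w)) in eIm.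
  rewrite (betaC (imv z) (revc z)) in zIm; rewrite (betaC (imv w) (revc w)) in wIm.
  lra.
have hPP := lemA (proj2 hQ) hPQ.
have hQQ := proj2 hQ.
move: hPP hQQ; rewrite beta_subl !beta_subr !beta_addl !beta_addr.
rewrite !beta_oppr in eRe; rewrite (betaC (revc w) (revc z)) (betaC (imv w) (imv z)).
lra.
Qed.

End Dir.



Section Cons.
Variable R : realType.
Variable d : nat.
Local Notation n := d.+1.
Implicit Types x y : 'cV[R]_n.

Lemma beta_e0 (v : 'cV[R]_n) : beta (delta_mx 0 0) v = v 0 0.
Proof. by rewrite beta_deltal /lsign /= mul1r. Qed.

Lemma exists_norm (T u0 : R) : 0 < T -> u0 != 0 -> exists l : R, l * l * T = 1 /\ 0 < l * u0.
Proof.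
move=> hT hu.
have hs : 0 < Num.sqrt T by rewrite sqrtr_gt0.
have hss : Num.sqrt T * Num.sqrt T = T by rewrite -expr2 sqr_sqrtr // ltW.
set q := Num.sqrt T in hs hss *.
case: (ltrgtP u0 0) => h; last by rewrite h eqxx in hu.
- exists (- q^-1); split.
    by rewrite mulrNN -hss; field; rewrite gt_eqF.
  by rewrite mulNr -mulrN mulr_gt0 ?invr_gt0 // oppr_gt0.
- exists (q^-1); split.
    by rewrite -hss; field; rewrite gt_eqF.
  by rewrite mulr_gt0 ?invr_gt0.
Qed.

Lemma construct x y : dS x -> dS y -> -1 < beta x y -> exists t s : 'cV[R]_n,
  [/\ beta t t = 1, beta s s = -1, beta t s = 0, 0 < t 0 0 &
      [/\ beta s x < 0, 0 < beta s y, beta t x ^+ 2 < beta s x ^+ 2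
        & beta t y ^+ 2 < beta s y ^+ 2]].
Proof.
rewrite /dS => hx hy hb.
set b := beta x y in hb.
have hyx : beta y x = b by rewrite betaC.
have h2b : 0 < 2 + 2 * b by lra.
set N := Num.sqrt (2 + 2 * b).
have hN : 0 < N by rewrite sqrtr_gt0.
have hNN : N * N = 2 + 2 * b by rewrite -expr2 sqr_sqrtr // ltW.
set k := N^-1.
have hk : 0 < k by rewrite invr_gt0.
have hkk : k * k * (2 + 2 * b) = 1 by rewrite -hNN /k; field; rewrite gt_eqF.
have [s hsdef] : exists s, s = k *: (x - y) by eexists.
have hss : beta s s = -1.
  rewrite hsdef beta_scalel beta_scaler beta_subl !beta_subr hx hy hyx -/b.
  transitivity (- (k * k * (2 + 2 * b))); [ring | by rewrite hkk].
have hsx : beta s x = - k * (1 + b).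
  rewrite hsdef beta_scalel beta_subl hx hyx; ring.
have hsy : beta s y = k * (1 + b).
  rewrite hsdef beta_scalel beta_subl hy -/b; ring.
have hsx2 : beta s x ^+ 2 = (1 + b) / 2.
  rewrite hsx.
  have -> : (- k * (1 + b)) ^+ 2 = k * k * (2 + 2 * b) * ((1 + b) / 2) by field.
  by rewrite hkk mul1r.
set s0 := s 0 0.
have [r hrdef] : exists r, r = delta_mx 0 0 + s0 *: s by eexists.
have hrs : beta r s = 0.
  rewrite hrdef beta_addl beta_scalel hss beta_e0 -/s0; ring.
have hrr : beta r r = 1 + s0 * s0.
  rewrite hrdef !(beta_addl, beta_addr, beta_scalel, beta_scaler) [beta s _]betaC hss !beta_e0 -/s0.
  rewrite !mxE /=; ring.
have [m hmdef] : exists m, m = 2^-1 *: (x + y) by eexists.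
have hms : beta m s = 0.
  rewrite hmdef hsdef beta_scalel beta_scaler beta_addl !beta_subr hx hy hyx -/b; ring.
have hmm : beta m m = (b - 1) / 2.
  rewrite hmdef beta_scalel beta_scaler beta_addl !beta_addr hx hy hyx -/b; by field.
set B := beta m r.
set t' := r + B *: m.
have ht's : beta t' s = 0.
  rewrite /t' beta_addl beta_scalel hrs hms; ring.
set T := beta t' t'.
have hT : T = 1 + s0 * s0 + B * B * (2 + (b - 1) / 2).
  rewrite /T /t' !(beta_addl, beta_addr, beta_scalel, beta_scaler) hrr hmm (betaC r m) -/B; ring.
have hTpos : 0 < T.
  rewrite hT; have : 0 <= B * B by rewrite -expr2 sqr_ge0.
  have : 0 <= s0 * s0 by rewrite -expr2 sqr_ge0.
  nra.
have ht'xy : beta t' x = beta t' y.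
  move: ht's; rewrite hsdef beta_scaler beta_subr => /eqP.
  rewrite mulf_eq0 (gt_eqF hk) /= subr_eq0 => /eqP //.
have ht'x : beta t' x = B * (1 + (b - 1) / 2).
  have : beta t' m = B * (1 + (b - 1) / 2).
    rewrite /t' beta_addl beta_scalel (betaC r m) -/B hmm; ring.
  rewrite hmdef beta_scaler beta_addr -ht'xy; lra.
have ht'0 : t' 0 0 != 0.
  by apply/eqP => h; have := timelike0 hTpos; rewrite h mul0r ltxx.
have [l [hl1 hl2]] := exists_norm hTpos ht'0.
have hA1 : 0 < 1 + (b - 1) / 2 by lra.
set A1 := 1 + (b - 1) / 2 in hA1 hT ht'x.
have hll : 0 < l * l.
  have : l * l != 0 by apply/eqP => h; move: hl1; rewrite h mul0r => /eqP; rewrite eq_sym oner_eq0.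
  by rewrite lt_def => ->; rewrite -expr2 sqr_ge0.
have key : B * B * A1 * A1 < A1 * T.
  have e : A1 * T - B * B * A1 * A1 = A1 * (1 + s0 * s0 + B * B) by rewrite hT /A1; ring.
  have : 0 < A1 * (1 + s0 * s0 + B * B).
    apply: mulr_gt0 => //.
    have : 0 <= s0 * s0 by rewrite -expr2 sqr_ge0.
    have : 0 <= B * B by rewrite -expr2 sqr_ge0.
    lra.
  rewrite -e; lra.
have hbound : (l * (B * A1)) ^+ 2 < (1 + b) / 2.
  have -> : (1 + b) / 2 = l * l * (A1 * T).
    transitivity (A1 * (l * l * T)); last by ring.
    by rewrite hl1 mulr1 /A1; field.
  have -> : (l * (B * A1)) ^+ 2 = l * l * (B * B * A1 * A1) by ring.
  by rewrite ltr_pM2l.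
have hsy2 : beta s y ^+ 2 = (1 + b) / 2.
  by rewrite hsy -hsx2 hsx; ring.
exists (l *: t'), s; split.
- by rewrite beta_scalel beta_scaler -/T; rewrite -hl1; ring.
- exact: hss.
- by rewrite beta_scalel ht's mulr0.
- by rewrite mxE.
split.
- rewrite hsx; nra.
- rewrite hsy; nra.
- by rewrite hsx2 beta_scalel ht'x.
- by rewrite hsy2 beta_scalel -ht'xy ht'x.
Qed.

End Cons.



Section Fin.
Variable R : realType.
Variable d : nat.
Local Notation n := d.+1.
Implicit Types x y t s : 'cV[R]_n.

Lemma imv_Em (e : R) t s v :
  imv (Em 0 (e%:C * 'i%C) (cplx t) (cplx s) *m cplx v)
  = (- e * beta s v) *: t + (e * beta t v) *: s.
Proof.
rewrite Em_mul !beta_cplx; apply/matrixP => i j; rewrite !mxE.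
rewrite !(cImD, cImB, cImN, cImM, cReD, cReB, cReN, cReM, cRer, cImr, cRei, cImi, cRe0, cIm0, cRe1, cIm1). ring.
Qed.

Lemma conj_Em c b t s :
  map_mx (@conjc R) (Em c b (cplx t) (cplx s)) = Em (conjc c) (conjc b) (cplx t) (cplx s).
Proof.
apply/matrixP => i j; rewrite /Em !mxE.
rewrite !(rmorphD, rmorphB, rmorphN, rmorphM, rmorph_nat, rmorph1, rmorph_lsign) /=. rewrite !oppr0.
by [].
Qed.

End Fin.



Section Main.
Variable R : realType.
Variable d : nat.
Local Notation n := d.+1.
Implicit Types x y t s : 'cV[R]_n.

Lemma conjcM' (a b : R[i]) : conjc (a * b) = conjc a * conjc b.
Proof. exact: rmorphM. Qed.
Lemma conjc_i : conjc ('i%C : R[i]) = - 'i%C.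
Proof. by apply/eqP; rewrite eq_complex /= oppr0 !eqxx. Qed.

Lemma Vplus_comb t s (a c : R) : beta t t = 1 -> beta s s = -1 -> beta t s = 0 ->
  0 < t 0 0 -> 0 < a -> c ^+ 2 < a ^+ 2 -> Vplus (a *: t + c *: s).
Proof.
move=> htt hss hts ht0 ha hc.
have huu : 0 < beta (a *: t + c *: s) (a *: t + c *: s).
  rewrite !(beta_addl, beta_addr, beta_scalel, beta_scaler) htt hss hts (betaC s t) hts.
  rewrite !expr2 in hc; lra.
split => //; apply: (lemC (t := t)) => //; first by rewrite htt.
rewrite !(beta_addl, beta_scalel) htt (betaC s t) hts; lra.
Qed.

Lemma dir21 x y : dS x -> dS y -> -1 < beta x y -> in_GXi (cplx x, cplx y).
Proof.
move=> hx hy hb.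
have [t [s [htt hss hts ht0 [hsx hsy htx hty]]]] := construct hx hy hb.
have ctt : beta (cplx t) (cplx t) = 1 by rewrite beta_cplx htt.
have css : beta (cplx s) (cplx s) = -1 by rewrite beta_cplx hss rmorphN1.
have cts : beta (cplx t) (cplx s) = 0 by rewrite beta_cplx hts.
have hII : ('i%C : R[i]) * 'i%C = -1 by rewrite -expr2 sqr_i.
set I := ('i%C : R[i]) in hII.
have bpE : (1 : R)%:C * I = I by rewrite rmorph1 mul1r.
have bmE : (-1 : R)%:C * I = - I by rewrite rmorphN1 mulN1r.
set g := Em 0 ((-1 : R)%:C * I) (cplx t) (cplx s).
set gb := Em 0 ((1 : R)%:C * I) (cplx t) (cplx s).
have hgb : map_mx (@conjc R) g = gb.
  rewrite /g conj_Em /gb; congr Em.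
    exact: (rmorph0 (@conjc R)).
  rewrite conjcM' conjc_real /I conjc_i rmorphN1 rmorph1; ring.
have hggb : g *m gb = 1%:M.
  rewrite /g /gb (Em_comp ctt css cts) bpE bmE.
  have -> : 0 * 0 + - I * I = 1 by rewrite mulNr hII; ring.
  by rewrite mul0r mulr0 addr0 Em10.
have hgbg : gb *m g = 1%:M.
  rewrite /g /gb (Em_comp ctt css cts) bpE bmE.
  have -> : 0 * 0 + I * - I = 1 by rewrite mulrN hII; ring.
  by rewrite mul0r mulr0 addr0 Em10.
have gpres : forall z w, beta (g *m z) (g *m w) = beta z w.
  by move=> z w; rewrite /g (Em_beta ctt css cts) // bmE mulrNN hII; ring.
have gbpres : forall z w, beta (gb *m z) (gb *m w) = beta z w.
  by move=> z w; rewrite /gb (Em_beta ctt css cts) // bpE hII; ring.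
have gdet : \det g = 1.
  pose h : R := Num.sqrt (2^-1).
  have hh : h * h = 2^-1 by rewrite -expr2 sqr_sqrtr // invr_ge0 ler0n.
  pose c0 : R[i] := h%:C.
  have hc0 : c0 * c0 * 2 = 1.
    by rewrite -rmorphM hh -(rmorph_nat (real_complex R) 2) -rmorphM mulVf ?rmorph1 ?pnatr_eq0.
  pose N := Em c0 (- I * c0) (cplx t) (cplx s).
  have hN : N *m N = g.
    rewrite /N (Em_comp ctt css cts) /g bmE; congr Em.
      have -> : c0 * c0 + - I * c0 * (- I * c0) = c0 * c0 * (1 + I * I) by ring.
      by rewrite hII subrr mulr0.
    have -> : c0 * (- I * c0) + - I * c0 * c0 = - I * (c0 * c0 * 2) by ring.
    by rewrite hc0 mulr1.
  have hNp : forall z w, beta (N *m z) (N *m w) = beta z w.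
    move=> z w; rewrite /N (Em_beta ctt css cts) //.
    have -> : 1 + - I * c0 * (- I * c0) = 1 + I * I * (c0 * c0) by ring.
    rewrite hII.
    transitivity (c0 * c0 * 2 - c0 * c0); first ring.
    rewrite hc0; ring.
  by rewrite -hN det_mulmx det_preserve.
exists g, (gb *m cplx x), (g *m cplx y); split.
- exact: (conj gdet gpres).
- split.
    by rewrite /dSC gbpres beta_cplx hx rmorphN1.
  change (Vplus (imv (gb *m cplx x))); rewrite /gb imv_Em.
  apply: (Vplus_comb htt hss hts ht0); first by lra.
  by rewrite !mul1r mulN1r sqrrN.
- split.
    by rewrite /dSC gpres beta_cplx hy rmorphN1.
  change (Vplus (imv (g *m cplx y))); rewrite /g imv_Em.
  apply: (Vplus_comb htt hss hts ht0); first by lra.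
  by rewrite opprK !mul1r mulN1r sqrrN.
- rewrite /actC; congr (_, _); rewrite [LHS]/= [RHS]/=.
    by rewrite mulmxA hggb mul1mx.
  by rewrite hgb mulmxA hgbg mul1mx.
Qed.

End Main.

Unset Implicit Arguments.

Theorem mainTheorem5 (R : realType) (d : nat) (hd : (1 <= d)%N) :
  (forall x y : 'cV[R]_(d.+1), dS x -> dS y ->
     (in_GXi (cplx x, cplx y) <-> -1 < beta x y) /\
     (-1 < beta x y <-> beta (x - y) (x - y) < 0)) /\
  (forall x : 'cV[R]_(d.+1),
     (dS x /\ in_GXi (cplx x, cplx (evec (inord 1)))) <->
     (dS x /\ x (inord 1) 0 < 1)).
Proof.
have part1 : forall x y : 'cV[R]_(d.+1), dS x -> dS y ->
     (in_GXi (cplx x, cplx y) <-> -1 < beta x y) /\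
     (-1 < beta x y <-> beta (x - y) (x - y) < 0).
  move=> x y hx hy; split.
    split; [exact: dir12 | exact: dir21].
  rewrite beta_subl !beta_subr hx hy (betaC y x).
  by split => h; lra.
split => //.
set e1 : 'cV[R]_(d.+1) := evec (inord 1).
have hl : lsign (inord 1 : 'I_d.+1) = -1 :> R.
  by rewrite /lsign inordK.
have he1 : dS e1 by rewrite /dS /e1 /evec beta_deltar hl !mxE !eqxx mulr1.
move=> x; split => -[hx h]; split => //.
  have := (proj1 (proj1 (part1 _ _ hx he1))) h.
  by rewrite /e1 /evec beta_deltar hl mulN1r; lra.
apply: (proj2 (proj1 (part1 _ _ hx he1))).
by rewrite /e1 /evec beta_deltar hl mulN1r; lra.
Qed.
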